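(* Let $\mathcal{C}$ be a braided closed monoidal category with pushouts preserved by all functors $-\otimes Y$, $Y\otimes-$, in which all epimorphisms are regular, and let $H$ be a Hopf algebra in $\mathcal{C}$. If $(A,A\bullet H,\pi_A,\rho_A)$ is an algebra in the monoidal category with oplax unit $\mathsf{qPMod}^H$, then $A$ and $A\bullet H$ are algebras in $\mathcal{C}$, and $\pi_A:A\otimes H\to A\bullet H$ and $\rho_A:A\to A\bullet H$ are algebra morphisms.
   Context: Monoidal unit $k$, braiding $\sigma$, right unit iso $r_X:X\to X\otimes k$; $H$ has multiplication $\mu_H$, unit $\eta_H$, comultiplication $\Delta$, counit $\epsilon$; $A\otimes H$ carries the tensor product algebra structure via the braiding. A partial comodule datum is $(X,X\bullet H,\pi_X,\rho_X)$ with $\pi_X:X\otimes H\to X\bullet H$ an epimorphism and $\rho_X:X\to X\bullet H$. Associated pushouts: $X\bullet k$ (of $\pi_X$ and $X\otimes\epsilon$, legs $X\bullet\epsilon$, $\pi_{X,\epsilon}$); $(X\bullet H)\bullet H$ (of $\pi_X$ and $\rho_X\otimes H$, legs $\rho_X\bullet H$, $\pi_{X\bullet H}$); $X\bullet(H\otimes H)$ (of $\pi_X$ and $X\otimes\Delta$, legs $X\bullet\Delta$, $\pi_{X,\Delta}$); $X\bullet(H\bullet H)$ (of $\pi_{X,\Delta}$ and $\pi_X\otimes H$, legs $\pi'_X$, $\pi'_{X,\Delta}$); $\Theta$ (of $\pi_{X\bullet H}$ and $\pi'_{X,\Delta}$, legs $\theta_1,\theta_2$). Quasi partial comodule: $\pi_{X,\epsilon}$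 iso with $(X\bullet\epsilon)\rho_X=\pi_{X,\epsilon}r_X$, and $\theta_1(\rho_X\bullet H)\rho_X=\theta_2\pi'_X(X\bullet\Delta)\rho_X$. Morphisms: pairs $(f,f\bullet H)$ with $(f\bullet H)\rho_X=\rho_Yf$, $(f\bullet H)\pi_X=\pi_Y(f\otimes H)$. $\mathsf{qPMod}^H$ is monoidal with oplax unit: the tensor of $X,Y$ is $(X\otimes Y,(X\otimes Y)\bullet H,\pi_{X\otimes Y},\overline\mu(\rho_X\otimes\rho_Y))$ where $(X\otimes Y)\bullet H$ with legs $\pi_{X\otimes Y}$ and $\overline\mu$ is the pushout of $\pi_X\otimes\pi_Y$ and $\mu_{X,Y}=(X\otimes Y\otimes\mu_H)(X\otimes\sigma_{H,Y}\otimes H)$; the oplax unit is $I=(k,H,\mathrm{id}_H,\eta_H)$ with oplax unit maps $r:X\to X\otimes I$, $l:X\to I\otimes X$. An algebra in it is an object $A$ with morphisms $m:A\otimes A\to A$, $u:I\to A$ of partial comodules such that $m(m\otimes A)=m(A\otimes m)$ (via the associator) and $m(A\otimes u)r_A=\mathrm{id}_A=m(u\otimes A)l_A$. *)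

(* Defs.v *)
Set Implicit Arguments.
Unset Strict Implicit.

Class Category (Ob : Type) := {
  hom : Ob -> Ob -> Type;
  idm : forall A, hom A A;
  comp : forall {A B D}, hom B D -> hom A B -> hom A D;
  comp_id_l : forall A B (f : hom A B), comp (idm B) f = f;
  comp_id_r : forall A B (f : hom A B), comp f (idm A) = f;
  comp_assoc : forall A B D E (h : hom D E) (g : hom B D) (f : hom A B),
      comp h (comp g f) = comp (comp h g) f }.

Notation "g ∘ f" := (comp g f) (at level 40, left associativity).

Section Basic.
Context {Ob : Type} {C : Category Ob}.

Definition epi {A B : Ob} (e : hom A B) : Prop :=
  forall D (g h : hom B D), g ∘ e = h ∘ e -> g = h.

Definition is_iso {A B : Ob} (f : hom A B) : Prop :=
  exists g : hom B A, g ∘ f = idm A /\ f ∘ g = idm B.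

Definition regular_epi {A B : Ob} (e : hom A B) : Prop :=
  exists (Z : Ob) (a b : hom Z A), e ∘ a = e ∘ b /\
    forall Q (h : hom A Q), h ∘ a = h ∘ b ->
      exists k : hom B Q, k ∘ e = h /\ forall k', k' ∘ e = h -> k' = k.

Definition is_pushout {A B D P : Ob} (f : hom A B) (g : hom A D)
    (i : hom B P) (j : hom D P) : Prop :=
  i ∘ f = j ∘ g /\
  forall Q (b : hom B Q) (d : hom D Q), b ∘ f = d ∘ g ->
    exists h : hom P Q, (h ∘ i = b /\ h ∘ j = d) /\
      forall h', h' ∘ i = b /\ h' ∘ j = d -> h' = h.
End Basic.

Class Monoidal (Ob : Type) {C : Category Ob} := {
  tens : Ob -> Ob -> Ob;
  tensm : forall {A B A' B'}, hom A A' -> hom B B' -> hom (tens A B) (tens A' B');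
  munit : Ob;
  asc : forall A B D, hom (tens (tens A B) D) (tens A (tens B D));
  asci : forall A B D, hom (tens A (tens B D)) (tens (tens A B) D);
  lu : forall A, hom (tens munit A) A;
  lui : forall A, hom A (tens munit A);
  ru : forall A, hom (tens A munit) A;
  rui : forall A, hom A (tens A munit);
  tensm_id : forall A B, tensm (idm A) (idm B) = idm (tens A B);
  tensm_comp : forall A1 A2 A3 B1 B2 B3 (f : hom A1 A2) (g : hom A2 A3)
      (f' : hom B1 B2) (g' : hom B2 B3),
      tensm (g ∘ f) (g' ∘ f') = tensm g g' ∘ tensm f f';
  asc_iso1 : forall A B D, asci A B D ∘ asc A B D = idm _;
  asc_iso2 : forall A B D, asc A B D ∘ asci A B D = idm _;
  lu_iso1 : forall A, lui A ∘ lu A = idm _;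
  lu_iso2 : forall A, lu A ∘ lui A = idm _;
  ru_iso1 : forall A, rui A ∘ ru A = idm _;
  ru_iso2 : forall A, ru A ∘ rui A = idm _;
  asc_nat : forall A B D A' B' D' (f : hom A A') (g : hom B B') (h : hom D D'),
      asc A' B' D' ∘ tensm (tensm f g) h = tensm f (tensm g h) ∘ asc A B D;
  lu_nat : forall A B (f : hom A B), lu B ∘ tensm (idm munit) f = f ∘ lu A;
  ru_nat : forall A B (f : hom A B), ru B ∘ tensm f (idm munit) = f ∘ ru A;
  pentagon : forall A B D E,
      tensm (idm A) (asc B D E) ∘ asc A (tens B D) E ∘ tensm (asc A B D) (idm E)
      = asc A B (tens D E) ∘ asc (tens A B) D E;
  triangle : forall A B,
      tensm (idm A) (lu B) ∘ asc A munit B = tensm (ru A) (idm B) }.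

Notation "A ⊗ B" := (tens A B) (at level 34, right associativity).
Notation "f ⊠ g" := (tensm f g) (at level 34, right associativity).

Class Braided (Ob : Type) {C : Category Ob} {M : @Monoidal Ob C} := {
  br : forall A B, hom (A ⊗ B) (B ⊗ A);
  bri : forall A B, hom (B ⊗ A) (A ⊗ B);
  br_iso1 : forall A B, bri A B ∘ br A B = idm _;
  br_iso2 : forall A B, br A B ∘ bri A B = idm _;
  br_nat : forall A B A' B' (f : hom A A') (g : hom B B'),
      br A' B' ∘ (f ⊠ g) = (g ⊠ f) ∘ br A B;
  hexagon1 : forall A B D,
      asc B D A ∘ br A (B ⊗ D) ∘ asc A B D
      = (idm B ⊠ br A D) ∘ asc B A D ∘ (br A B ⊠ idm D);
  hexagon2 : forall A B D,
      asci D A B ∘ br (A ⊗ B) D ∘ asci A B D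
      = (br A D ⊠ idm B) ∘ asci A D B ∘ (idm A ⊠ br B D) }.

(* Closedness: every functor - ⊗ Y has a right adjoint (internal hom with
   evaluation); in the braided setting this also gives Y ⊗ - a right adjoint. *)
Class Closed (Ob : Type) {C : Category Ob} {M : @Monoidal Ob C} := {
  ihom : Ob -> Ob -> Ob;
  ev : forall Y Z, hom (ihom Y Z ⊗ Y) Z;
  ev_univ : forall X Y Z (f : hom (X ⊗ Y) Z),
      exists g : hom X (ihom Y Z), ev Y Z ∘ (g ⊠ idm Y) = f /\
        forall g', ev Y Z ∘ (g' ⊠ idm Y) = f -> g' = g }.

Class HasPushouts (Ob : Type) {C : Category Ob} := {
  po_ob : forall {A B D}, hom A B -> hom A D -> Ob;
  po_inl : forall {A B D} (f : hom A B) (g : hom A D), hom B (po_ob f g);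
  po_inr : forall {A B D} (f : hom A B) (g : hom A D), hom D (po_ob f g);
  po_spec : forall A B D (f : hom A B) (g : hom A D),
      is_pushout f g (po_inl f g) (po_inr f g) }.

Section Monoidal_defs.
Context {Ob : Type} {C : Category Ob} {M : @Monoidal Ob C} {Br : @Braided Ob C M}.

Definition tensor_preserves_pushouts : Prop :=
  forall (Y A B D P : Ob) (f : hom A B) (g : hom A D) (i : hom B P) (j : hom D P),
    is_pushout f g i j ->
    is_pushout (f ⊠ idm Y) (g ⊠ idm Y) (i ⊠ idm Y) (j ⊠ idm Y) /\
    is_pushout (idm Y ⊠ f) (idm Y ⊠ g) (idm Y ⊠ i) (idm Y ⊠ j).

Definition all_epis_regular : Prop :=
  forall (A B : Ob) (e : hom A B), epi e -> regular_epi e.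

Definition shuf (A B D E : Ob) : hom ((A ⊗ B) ⊗ (D ⊗ E)) ((A ⊗ D) ⊗ (B ⊗ E)) :=
  asci A D (B ⊗ E) ∘ (idm A ⊠ asc D B E) ∘ (idm A ⊠ (br B D ⊠ idm E))
  ∘ (idm A ⊠ asci B D E) ∘ asc A B (D ⊗ E).

Definition tmul {A B : Ob} (mA : hom (A ⊗ A) A) (mB : hom (B ⊗ B) B)
  : hom ((A ⊗ B) ⊗ (A ⊗ B)) (A ⊗ B) := (mA ⊠ mB) ∘ shuf A B A B.
Definition tunit {A B : Ob} (uA : hom munit A) (uB : hom munit B)
  : hom munit (A ⊗ B) := (uA ⊠ uB) ∘ lui munit.

Definition is_algebra {A : Ob} (m : hom (A ⊗ A) A) (u : hom munit A) : Prop :=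
  m ∘ (m ⊠ idm A) = m ∘ (idm A ⊠ m) ∘ asc A A A /\
  m ∘ (u ⊠ idm A) ∘ lui A = idm A /\
  m ∘ (idm A ⊠ u) ∘ rui A = idm A.

Definition is_alg_morph {A B : Ob} (mA : hom (A ⊗ A) A) (uA : hom munit A)
    (mB : hom (B ⊗ B) B) (uB : hom munit B) (f : hom A B) : Prop :=
  f ∘ mA = mB ∘ (f ⊠ f) /\ f ∘ uA = uB.

Record HopfAlg (H : Ob) := {
  hmul : hom (H ⊗ H) H;
  hunit : hom munit H;
  hcomul : hom H (H ⊗ H);
  hcounit : hom H munit;
  hanti : hom H H;
  h_assoc : hmul ∘ (hmul ⊠ idm H) = hmul ∘ (idm H ⊠ hmul) ∘ asc H H H;
  h_unitl : hmul ∘ (hunit ⊠ idm H) = lu H;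
  h_unitr : hmul ∘ (idm H ⊠ hunit) = ru H;
  h_coassoc : asc H H H ∘ (hcomul ⊠ idm H) ∘ hcomul = (idm H ⊠ hcomul) ∘ hcomul;
  h_counitl : lu H ∘ (hcounit ⊠ idm H) ∘ hcomul = idm H;
  h_counitr : ru H ∘ (idm H ⊠ hcounit) ∘ hcomul = idm H;
  h_comul_mul : hcomul ∘ hmul = tmul hmul hmul ∘ (hcomul ⊠ hcomul);
  h_comul_unit : hcomul ∘ hunit = tunit hunit hunit;
  h_counit_mul : hcounit ∘ hmul = lu munit ∘ (hcounit ⊠ hcounit);
  h_counit_unit : hcounit ∘ hunit = idm munit;
  h_antipode_l : hmul ∘ (hanti ⊠ idm H) ∘ hcomul = hunit ∘ hcounit;
  h_antipode_r : hmul ∘ (idm H ⊠ hanti) ∘ hcomul = hunit ∘ hcounit }.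

End Monoidal_defs.

Section PComod.
Context {Ob : Type} {C : Category Ob} {M : @Monoidal Ob C} {Br : @Braided Ob C M}
        {PO : @HasPushouts Ob C}.

(* (X, XH, pi, rho) is a quasi partial comodule over H:
   pi epi, pi_{X,eps} iso with (X•eps) rho = pi_{X,eps} r_X, and
   theta1 (rho•H) rho = theta2 pi'_X (X•Delta) rho. *)
Definition quasi_pcomod {H : Ob} (HH : HopfAlg H) (X XH : Ob)
    (pi : hom (X ⊗ H) XH) (rho : hom X XH) : Prop :=
  epi pi /\
  is_iso (po_inr pi (idm X ⊠ hcounit HH)) /\
  po_inl pi (idm X ⊠ hcounit HH) ∘ rho = po_inr pi (idm X ⊠ hcounit HH) ∘ rui X /\
  (let rhoH := po_inl pi (rho ⊠ idm H) in
   let piXH := po_inr pi (rho ⊠ idm H) in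
   let XDel := po_inl pi (idm X ⊠ hcomul HH) in
   let piXDel := po_inr pi (idm X ⊠ hcomul HH) in
   let pi' := po_inl piXDel ((pi ⊠ idm H) ∘ asci X H H) in
   let pi'Del := po_inr piXDel ((pi ⊠ idm H) ∘ asci X H H) in
   let th1 := po_inl piXH pi'Del in
   let th2 := po_inr piXH pi'Del in
   th1 ∘ rhoH ∘ rho = th2 ∘ pi' ∘ XDel ∘ rho).

Definition mu_XY {H : Ob} (HH : HopfAlg H) (X Y : Ob)
  : hom ((X ⊗ H) ⊗ (Y ⊗ H)) ((X ⊗ Y) ⊗ H) :=
  (idm (X ⊗ Y) ⊠ hmul HH) ∘ shuf X H Y H.

Definition tens_bullet {H : Ob} (HH : HopfAlg H) {X XH Y YH : Ob}
    (piX : hom (X ⊗ H) XH) (piY : hom (Y ⊗ H) YH) : Ob :=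
  po_ob (piX ⊠ piY) (mu_XY HH X Y).
Definition tens_mubar {H : Ob} (HH : HopfAlg H) {X XH Y YH : Ob}
    (piX : hom (X ⊗ H) XH) (piY : hom (Y ⊗ H) YH)
  : hom (XH ⊗ YH) (tens_bullet HH piX piY) :=
  po_inl (piX ⊠ piY) (mu_XY HH X Y).
Definition tens_pi {H : Ob} (HH : HopfAlg H) {X XH Y YH : Ob}
    (piX : hom (X ⊗ H) XH) (piY : hom (Y ⊗ H) YH)
  : hom ((X ⊗ Y) ⊗ H) (tens_bullet HH piX piY) :=
  po_inr (piX ⊠ piY) (mu_XY HH X Y).
Definition tens_rho {H : Ob} (HH : HopfAlg H) {X XH Y YH : Ob}
    (piX : hom (X ⊗ H) XH) (piY : hom (Y ⊗ H) YH)
    (rhoX : hom X XH) (rhoY : hom Y YH)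
  : hom (X ⊗ Y) (tens_bullet HH piX piY) :=
  tens_mubar HH piX piY ∘ (rhoX ⊠ rhoY).

(* Morphisms of qPMod^H are pairs (f, f•H); since pi is epi, f•H is
   determined by f, so equalities of morphisms are equalities of the
   C-components. The unit object is I = (k, H, id_H, eta_H), where
   k ⊗ H is identified with H via the left unitor. *)
Definition qPMod_algebra {H : Ob} (HH : HopfAlg H) (A AH : Ob)
    (piA : hom (A ⊗ H) AH) (rhoA : hom A AH)
    (m : hom (A ⊗ A) A) (mH : hom (tens_bullet HH piA piA) AH)
    (u : hom munit A) (uH : hom H AH) : Prop :=
  quasi_pcomod HH piA rhoA /\
  mH ∘ tens_pi HH piA piA = piA ∘ (m ⊠ idm H) /\
  mH ∘ tens_rho HH piA piA rhoA rhoA = rhoA ∘ m /\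
  uH ∘ lu H = piA ∘ (u ⊠ idm H) /\
  uH ∘ hunit HH = rhoA ∘ u /\
  m ∘ (m ⊠ idm A) = m ∘ (idm A ⊠ m) ∘ asc A A A /\
  m ∘ (idm A ⊠ u) ∘ rui A = idm A /\
  m ∘ (u ⊠ idm A) ∘ lui A = idm A.

End PComod.

Arguments qPMod_algebra {Ob C M Br PO H} HH {A AH} piA rhoA m mH u uH.

(* Main.v *)
Require Import Defs.
From Stdlib Require Import ssreflect.
Set Implicit Arguments.
Unset Strict Implicit.

Section Mon.
Context {Ob : Type} {C : Category Ob} {M : @Monoidal Ob C}.

Lemma tid (A B : Ob) : idm A ⊠ idm B = idm (A ⊗ B).
Proof. exact: tensm_id. Qed.
Lemma tsl (A B D E : Ob) (f : hom A B) (g : hom B D) :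
  (g ∘ f) ⊠ idm E = (g ⊠ idm E) ∘ (f ⊠ idm E).
Proof. by rewrite -tensm_comp comp_id_l. Qed.
Lemma tsr (A B D E : Ob) (f : hom A B) (g : hom B D) :
  idm E ⊠ (g ∘ f) = (idm E ⊠ g) ∘ (idm E ⊠ f).
Proof. by rewrite -tensm_comp comp_id_l. Qed.
Lemma sepl (A B D E : Ob) (f : hom A B) (g : hom D E) :
  f ⊠ g = (f ⊠ idm E) ∘ (idm A ⊠ g).
Proof. by rewrite -tensm_comp comp_id_l comp_id_r. Qed.
Lemma sepr (A B D E : Ob) (f : hom A B) (g : hom D E) :
  f ⊠ g = (idm B ⊠ g) ∘ (f ⊠ idm D).
Proof. by rewrite -tensm_comp comp_id_l comp_id_r. Qed.
End Mon.

Section MonK.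
Context {Ob : Type} {C : Category Ob} {M : @Monoidal Ob C}.
Ltac ra := repeat rewrite <- comp_assoc.
Lemma tailid (A B : Ob) (f g : hom A B) : f ∘ idm A = g ∘ idm A -> f = g.
Proof. by rewrite !comp_id_r. Qed.
Lemma ascK A B D A' B' D' E (f : hom A A') (g : hom B B') (h : hom D D') (k : hom E _) :
  asc A' B' D' ∘ (((f ⊠ g) ⊠ h) ∘ k) = (f ⊠ (g ⊠ h)) ∘ (asc A B D ∘ k).
Proof. by rewrite !comp_assoc asc_nat. Qed.
Lemma asciK A B D A' B' D' E (f : hom A A') (g : hom B B') (h : hom D D') (k : hom E _) :
  asci A' B' D' ∘ ((f ⊠ (g ⊠ h)) ∘ k) = ((f ⊠ g) ⊠ h) ∘ (asci A B D ∘ k).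
Proof.
  have e : asci A' B' D' ∘ (f ⊠ (g ⊠ h)) = ((f ⊠ g) ⊠ h) ∘ asci A B D.
  { rewrite -[f ⊠ (g ⊠ h)]comp_id_r -(asc_iso2 A B D) (comp_assoc (f ⊠ (g ⊠ h))) -asc_nat.
    by rewrite !comp_assoc asc_iso1 comp_id_l. }
  by rewrite !comp_assoc e.
Qed.
Lemma aaK A B D E (k : hom E _) : asci A B D ∘ (asc A B D ∘ k) = k.
Proof. by rewrite comp_assoc asc_iso1 comp_id_l. Qed.
Lemma aa'K A B D E (k : hom E _) : asc A B D ∘ (asci A B D ∘ k) = k.
Proof. by rewrite comp_assoc asc_iso2 comp_id_l. Qed.
Lemma luluiK A E (k : hom E _) : lu A ∘ (lui A ∘ k) = k.
Proof. by rewrite comp_assoc lu_iso2 comp_id_l. Qed.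
Lemma luiluK A E (k : hom E _) : lui A ∘ (lu A ∘ k) = k.
Proof. by rewrite comp_assoc lu_iso1 comp_id_l. Qed.
Lemma ruruiK A E (k : hom E _) : ru A ∘ (rui A ∘ k) = k.
Proof. by rewrite comp_assoc ru_iso2 comp_id_l. Qed.
Lemma ruiruK A E (k : hom E _) : rui A ∘ (ru A ∘ k) = k.
Proof. by rewrite comp_assoc ru_iso1 comp_id_l. Qed.
Lemma luK A B E (f : hom A B) (k : hom E _) : lu B ∘ ((idm munit ⊠ f) ∘ k) = f ∘ (lu A ∘ k).
Proof. by rewrite !comp_assoc lu_nat. Qed.
Lemma ruK A B E (f : hom A B) (k : hom E _) : ru B ∘ ((f ⊠ idm munit) ∘ k) = f ∘ (ru A ∘ k).
Proof. by rewrite !comp_assoc ru_nat. Qed.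
Lemma luiK A B E (f : hom A B) (k : hom E _) : lui B ∘ (f ∘ k) = (idm munit ⊠ f) ∘ (lui A ∘ k).
Proof.
  transitivity (lui B ∘ (f ∘ (lu A ∘ (lui A ∘ k)))); first by rewrite luluiK.
  by rewrite -luK luiluK.
Qed.
Lemma ruiK A B E (f : hom A B) (k : hom E _) : rui B ∘ (f ∘ k) = (f ⊠ idm munit) ∘ (rui A ∘ k).
Proof.
  transitivity (rui B ∘ (f ∘ (ru A ∘ (rui A ∘ k)))); first by rewrite ruruiK.
  by rewrite -ruK ruiruK.
Qed.
Lemma pentK A B D E F (k : hom F _) :
  (idm A ⊠ asc B D E) ∘ (asc A (B ⊗ D) E ∘ ((asc A B D ⊠ idm E) ∘ k))
  = asc A B (D ⊗ E) ∘ (asc (A ⊗ B) D E ∘ k).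
Proof. by rewrite !comp_assoc pentagon. Qed.
Lemma triK A B E (k : hom E _) :
  (idm A ⊠ lu B) ∘ (asc A munit B ∘ k) = (ru A ⊠ idm B) ∘ k.
Proof. by rewrite comp_assoc triangle. Qed.
Lemma tcK A1 A2 A3 B1 B2 B3 E (f : hom A1 A2) (g : hom A2 A3) (f' : hom B1 B2) (g' : hom B2 B3) (k : hom E _) :
  (g ⊠ g') ∘ ((f ⊠ f') ∘ k) = ((g ∘ f) ⊠ (g' ∘ f')) ∘ k.
Proof. by rewrite comp_assoc tensm_comp. Qed.
End MonK.

Section Kelly.
Context {Ob : Type} {C : Category Ob} {M : @Monoidal Ob C}.
Ltac ra := repeat rewrite <- comp_assoc.

Lemma cancel_kl A B (f g : hom A B) : idm munit ⊠ f = idm munit ⊠ g -> f = g.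
Proof.
  move=> e.
  have ef : f = lu B ∘ ((idm munit ⊠ f) ∘ lui A) by rewrite luK lu_iso2 comp_id_r.
  have eg : g = lu B ∘ ((idm munit ⊠ g) ∘ lui A) by rewrite luK lu_iso2 comp_id_r.
  by rewrite ef eg e.
Qed.
Lemma cancel_kr A B (f g : hom A B) : f ⊠ idm munit = g ⊠ idm munit -> f = g.
Proof.
  move=> e.
  have ef : f = ru B ∘ ((f ⊠ idm munit) ∘ rui A) by rewrite ruK ru_iso2 comp_id_r.
  have eg : g = ru B ∘ ((g ⊠ idm munit) ∘ rui A) by rewrite ruK ru_iso2 comp_id_r.
  by rewrite ef eg e.
Qed.
Lemma cancel_r A B D (X : hom A B) (Y : hom B A) (f g : hom B D) :
  X ∘ Y = idm B -> f ∘ X = g ∘ X -> f = g.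
Proof.
  move=> iso e.
  by rewrite -(comp_id_r f) -(comp_id_r g) -iso !comp_assoc e.
Qed.
Lemma cancel_l A B D (X : hom B D) (Y : hom D B) (f g : hom A B) :
  Y ∘ X = idm B -> X ∘ f = X ∘ g -> f = g.
Proof.
  move=> iso e.
  by rewrite -(comp_id_l f) -(comp_id_l g) -iso -!comp_assoc e.
Qed.

Lemma K1 A B : lu (A ⊗ B) ∘ asc munit A B = lu A ⊠ idm B.
Proof.
  apply: cancel_kl.
  apply: (@cancel_r _ _ _ (asc munit (munit ⊗ A) B ∘ (asc munit munit A ⊠ idm B))
            ((asci munit munit A ⊠ idm B) ∘ asci munit (munit ⊗ A) B)).
  { by rewrite -comp_assoc (comp_assoc (asc munit munit A ⊠ idm B)) -tensm_comp asc_iso2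
       comp_id_l tid comp_id_l asc_iso2. }
  apply: tailid. ra.
  rewrite tsr. ra. rewrite pentK triK -(tid A B) -ascK -triangle tsl. ra.
  by rewrite ascK.
Qed.

Lemma K1K A B E (k : hom E _) : lu (A ⊗ B) ∘ (asc munit A B ∘ k) = (lu A ⊠ idm B) ∘ k.
Proof. by rewrite comp_assoc K1. Qed.

Lemma K2 A B : (idm A ⊠ ru B) ∘ asc A B munit = ru (A ⊗ B).
Proof.
  apply: cancel_kr.
  apply: (@cancel_l _ _ _ (asc A B munit) (asci A B munit)); first exact: asc_iso1.
  apply: tailid. ra.
  rewrite tsl. ra. rewrite ascK -(triangle B munit) tsr. ra.
  rewrite pentK -ascK tid triK. done.
Qed.
Lemma K2' A B : ru (A ⊗ B) ∘ asci A B munit = idm A ⊠ ru B.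
Proof. by rewrite -K2 -comp_assoc asc_iso2 comp_id_r. Qed.
Lemma K2'K A B E (k : hom E _) : ru (A ⊗ B) ∘ (asci A B munit ∘ k) = (idm A ⊠ ru B) ∘ k.
Proof. by rewrite comp_assoc K2'. Qed.
Lemma tri' A B : (ru A ⊠ idm B) ∘ asci A munit B = idm A ⊠ lu B.
Proof. by rewrite -triangle -comp_assoc asc_iso2 comp_id_r. Qed.

Lemma luT X : lu (munit ⊗ X) = idm munit ⊠ lu X.
Proof.
  apply: (@cancel_l _ _ _ (lu X) (lui X)); first exact: lu_iso1.
  by rewrite lu_nat.
Qed.
Lemma ruT X : ru (X ⊗ munit) = ru X ⊠ idm munit.
Proof.
  apply: (@cancel_l _ _ _ (ru X) (rui X)); first exact: ru_iso1.
  by rewrite ru_nat.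
Qed.
Lemma K3 : lu munit = ru (@munit Ob C M).
Proof.
  apply: cancel_kr.
  by rewrite -K1 luT triangle.
Qed.
End Kelly.

Section Braid.
Context {Ob : Type} {C : Category Ob} {M : @Monoidal Ob C} {Br : @Braided Ob C M}.
Ltac ra := repeat rewrite <- comp_assoc.

Lemma brK A B A' B' E (f : hom A A') (g : hom B B') (k : hom E _) :
  br A' B' ∘ ((f ⊠ g) ∘ k) = (g ⊠ f) ∘ (br A B ∘ k).
Proof. by rewrite !comp_assoc br_nat. Qed.
Lemma bbK A B E (k : hom E _) : bri A B ∘ (br A B ∘ k) = k.
Proof. by rewrite comp_assoc br_iso1 comp_id_l. Qed.
Lemma hexK A B D E (k : hom E _) :
  asc B D A ∘ (br A (B ⊗ D) ∘ (asc A B D ∘ k)) =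
  (idm B ⊠ br A D) ∘ (asc B A D ∘ ((br A B ⊠ idm D) ∘ k)).
Proof. by rewrite !comp_assoc hexagon1. Qed.
Lemma hex2K A B D E (k : hom E _) :
  asci D A B ∘ (br (A ⊗ B) D ∘ (asci A B D ∘ k)) =
  (br A D ⊠ idm B) ∘ (asci A D B ∘ ((idm A ⊠ br B D) ∘ k)).
Proof. by rewrite !comp_assoc hexagon2. Qed.

Lemma B2 A : lu A ∘ br A munit = ru A.
Proof.
  symmetry. apply: cancel_kr.
  apply: (cancel_l (X:=br A munit) (Y:=bri A munit)); first exact: br_iso1.
  apply: tailid. ra.
  rewrite -(triangle A munit). ra. rewrite brK -K1. ra.
  rewrite hexK luK K1K tcK !comp_id_l. done.
Qed.
Lemma B1 A : ru A ∘ br munit A = lu A.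
Proof.
  symmetry. apply: cancel_kl.
  apply: (cancel_l (X:=br munit A) (Y:=bri munit A)); first exact: br_iso1.
  apply: tailid. ra.
  rewrite -(tri' munit A). ra. rewrite brK -K2'. ra.
  rewrite hex2K ruK K2'K tcK !comp_id_l. done.
Qed.
End Braid.

Section TLem.
Context {Ob : Type} {C : Category Ob} {M : @Monoidal Ob C} {Br : @Braided Ob C M}.
Ltac ra := repeat rewrite <- comp_assoc.

Definition T (Y Z W : Ob) : hom (Y ⊗ (Z ⊗ W)) (Z ⊗ (Y ⊗ W)) :=
  asc Z Y W ∘ (br Y Z ⊠ idm W) ∘ asci Y Z W.

Lemma shufT A B D E : shuf A B D E = asci A D (B ⊗ E) ∘ (idm A ⊠ T B D E) ∘ asc A B (D ⊗ E).
Proof. rewrite /shuf /T !tsr. ra. reflexivity. Qed.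

Lemma aa'1K A B D E F (k : hom F _) :
  (asc A B D ⊠ idm E) ∘ ((asci A B D ⊠ idm E) ∘ k) = k.
Proof. by rewrite tcK asc_iso2 comp_id_l tid comp_id_l. Qed.
Lemma aa1K A B D E F (k : hom F _) :
  (asci A B D ⊠ idm E) ∘ ((asc A B D ⊠ idm E) ∘ k) = k.
Proof. by rewrite tcK asc_iso1 comp_id_l tid comp_id_l. Qed.
Lemma pent2K A B D E F (k : hom F _) :
  (idm A ⊠ asc B D E) ∘ (asc A (B ⊗ D) E ∘ k)
  = asc A B (D ⊗ E) ∘ (asc (A ⊗ B) D E ∘ ((asci A B D ⊠ idm E) ∘ k)).
Proof. by rewrite -pentK aa'1K. Qed.
Lemma pent3K A B D E F (k : hom F _) :
  asc A (B ⊗ D) E ∘ ((asc A B D ⊠ idm E) ∘ k)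
  = (idm A ⊠ asci B D E) ∘ (asc A B (D ⊗ E) ∘ (asc (A ⊗ B) D E ∘ k)).
Proof. by rewrite -pentK tcK asc_iso1 comp_id_l tid comp_id_l. Qed.
Lemma P1K b c d W F (k : hom F _) :
  asci b c (d ⊗ W) ∘ ((idm b ⊠ asc c d W) ∘ (asc b (c ⊗ d) W ∘ k))
  = asc (b ⊗ c) d W ∘ ((asci b c d ⊠ idm W) ∘ k).
Proof. by rewrite pent2K aaK. Qed.
Lemma P4K Y c e W F (k : hom F _) :
  asc (Y ⊗ c) e W ∘ ((asci Y c e ⊠ idm W) ∘ (asci Y (c ⊗ e) W ∘ k))
  = asci Y c (e ⊗ W) ∘ ((idm Y ⊠ asc c e W) ∘ k).
Proof.
  apply: (cancel_l (X:=asc Y c (e ⊗ W)) (Y:=asci Y c (e ⊗ W))); first exact: asc_iso1.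
  by rewrite aa'K -pent2K aa'K.
Qed.

Lemma brtK A B A' B' D D' E (f : hom A A') (g : hom B B') (h : hom D D') (k : hom E _) :
  (br A' B' ⊠ idm D') ∘ (((f ⊠ g) ⊠ h) ∘ k) = ((g ⊠ f) ⊠ h) ∘ ((br A B ⊠ idm D) ∘ k).
Proof. by rewrite !comp_assoc -!tensm_comp br_nat comp_id_l comp_id_r. Qed.

Lemma TnatK Y Z W Y' Z' W' E (f : hom Y Y') (g : hom Z Z') (h : hom W W') (k : hom E _) :
  T Y' Z' W' ∘ ((f ⊠ (g ⊠ h)) ∘ k) = (g ⊠ (f ⊠ h)) ∘ (T Y Z W ∘ k).
Proof. rewrite /T. ra. by rewrite asciK brtK ascK. Qed.

Lemma hexE A B D : br A (B ⊗ D) =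
  asci B D A ∘ (idm B ⊠ br A D) ∘ asc B A D ∘ (br A B ⊠ idm D) ∘ asci A B D.
Proof.
  by rewrite -!comp_assoc -hexK aaK asc_iso2 comp_id_r.
Qed.
Lemma hex2E A B D : br (A ⊗ B) D =
  asc D A B ∘ (br A D ⊠ idm B) ∘ asci A D B ∘ (idm A ⊠ br B D) ∘ asc A B D.
Proof.
  by rewrite -!comp_assoc -hex2K aa'K asc_iso1 comp_id_r.
Qed.

Lemma H3 b c d W :
  (idm c ⊠ asc b d W) ∘ asc c (b ⊗ d) W ∘ (T b c d ⊠ idm W)
  = T b c (d ⊗ W) ∘ (idm b ⊠ asc c d W) ∘ asc b (c ⊗ d) W.
Proof.
  apply: tailid. rewrite /T. ra. rewrite !tsl. ra.
  rewrite pentK ascK tid.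
  by rewrite P1K.
Qed.

Lemma H1 Y c e W :
  asc c e (Y ⊗ W) ∘ T Y (c ⊗ e) W
  = (idm c ⊠ T Y e W) ∘ T Y c (e ⊗ W) ∘ (idm Y ⊠ asc c e W).
Proof.
  apply: tailid. rewrite /T hexE. ra. rewrite !tsl !tsr. ra.
  rewrite -pent2K ascK pent3K ascK P4K tid. done.
Qed.

Lemma H2 b d e W :
  (idm e ⊠ asc b d W) ∘ T (b ⊗ d) e W
  = T b e (d ⊗ W) ∘ (idm b ⊠ T d e W) ∘ asc b d (e ⊗ W).
Proof.
  apply: tailid. rewrite /T hex2E. ra. rewrite !tsl !tsr. ra.
  rewrite pentK ascK -P1K ascK pent3K aa'K tid. done.
Qed.
End TLem.

Section Main.
Context {Ob : Type} {C : Category Ob} {M : @Monoidal Ob C} {Br : @Braided Ob C M}.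
Ltac ra := repeat rewrite <- comp_assoc.

Lemma H2W X b d e W F (k : hom F _) :
  (idm X ⊠ (idm e ⊠ asc b d W)) ∘ ((idm X ⊠ T (b ⊗ d) e W) ∘ k)
  = (idm X ⊠ T b e (d ⊗ W)) ∘ ((idm X ⊠ (idm b ⊠ T d e W)) ∘ ((idm X ⊠ asc b d (e ⊗ W)) ∘ k)).
Proof. by rewrite !tcK !comp_id_l H2. Qed.
Lemma H1W X Y c e W F (k : hom F _) :
  (idm X ⊠ asc c e (Y ⊗ W)) ∘ ((idm X ⊠ T Y (c ⊗ e) W) ∘ k)
  = (idm X ⊠ (idm c ⊠ T Y e W)) ∘ ((idm X ⊠ T Y c (e ⊗ W)) ∘ ((idm X ⊠ (idm Y ⊠ asc c e W)) ∘ k)).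
Proof. by rewrite !tcK !comp_id_l H1. Qed.
Lemma H3W X b c d W F (k : hom F _) :
  (idm X ⊠ (idm c ⊠ asc b d W)) ∘ ((idm X ⊠ asc c (b ⊗ d) W) ∘ ((idm X ⊠ (T b c d ⊠ idm W)) ∘ k))
  = (idm X ⊠ T b c (d ⊗ W)) ∘ ((idm X ⊠ (idm b ⊠ asc c d W)) ∘ ((idm X ⊠ asc b (c ⊗ d) W) ∘ k)).
Proof. by rewrite !tcK !comp_id_l H3. Qed.
Lemma TnatW X Y Z W W' F (g : hom W W') (k : hom F _) :
  (idm X ⊠ T Y Z W') ∘ ((idm X ⊠ (idm Y ⊠ (idm Z ⊠ g))) ∘ k)
  = (idm X ⊠ (idm Z ⊠ (idm Y ⊠ g))) ∘ ((idm X ⊠ T Y Z W) ∘ k).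
Proof.
  have e : T Y Z W' ∘ (idm Y ⊠ (idm Z ⊠ g)) = (idm Z ⊠ (idm Y ⊠ g)) ∘ T Y Z W.
  { apply: tailid. ra. exact: TnatK. }
  by rewrite !tcK !comp_id_l e.
Qed.
Lemma waa'K X A B D F (k : hom F _) :
  (idm X ⊠ asc A B D) ∘ ((idm X ⊠ asci A B D) ∘ k) = k.
Proof. by rewrite tcK comp_id_l asc_iso2 tid comp_id_l. Qed.
Lemma wwaa'K X Y A B D F (k : hom F _) :
  (idm X ⊠ (idm Y ⊠ asc A B D)) ∘ ((idm X ⊠ (idm Y ⊠ asci A B D)) ∘ k) = k.
Proof. by rewrite tcK comp_id_l -tsr asc_iso2 !tid comp_id_l. Qed.

Lemma shuf_assoc a b c d e f :
  (asc a c e ⊠ asc b d f) ∘ shuf (a ⊗ c) (b ⊗ d) e f ∘ (shuf a b c d ⊠ idm (e ⊗ f))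
  = shuf a b (c ⊗ e) (d ⊗ f) ∘ (idm (a ⊗ b) ⊠ shuf c d e f) ∘ asc (a ⊗ b) (c ⊗ d) (e ⊗ f).
Proof.
  apply: (cancel_l (X:=(idm a ⊠ asc c e (b ⊗ (d ⊗ f))) ∘ asc a (c ⊗ e) (b ⊗ (d ⊗ f)))
                   (Y:=asci a (c ⊗ e) (b ⊗ (d ⊗ f)) ∘ (idm a ⊠ asci c e (b ⊗ (d ⊗ f))))).
  { by rewrite -!comp_assoc tcK comp_id_l asc_iso1 tid comp_id_l asc_iso1. }
  apply: tailid. rewrite !shufT. ra.
  rewrite (sepl (asc a c e)). ra.
  rewrite pentK -(tid (a ⊗ c) e) ascK aa'K H2W.
  rewrite !tsl. ra.
  rewrite -(tid a c) ascK ascK ascK -pent2K ascK pent3K.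
  rewrite aa'K H1W !(@tsr _ _ _ _ _ _ (a ⊗ b)). ra.
  rewrite -(tid a b) ascK ascK ascK wwaa'K TnatW H3W waa'K.
  done.
Qed.
End Main.

Section Unit.
Context {Ob : Type} {C : Category Ob} {M : @Monoidal Ob C} {Br : @Braided Ob C M}.
Ltac ra := repeat rewrite <- comp_assoc.

Lemma Tnat Y Z W Y' Z' W' (f : hom Y Y') (g : hom Z Z') (h : hom W W') :
  T Y' Z' W' ∘ (f ⊠ (g ⊠ h)) = (g ⊠ (f ⊠ h)) ∘ T Y Z W.
Proof. apply: tailid. ra. exact: TnatK. Qed.

Lemma tsplit A B D D' E (f : hom A B) (g : hom D' E) (h : hom D D') :
  f ⊠ (g ∘ h) = (f ⊠ g) ∘ (idm A ⊠ h).
Proof. by rewrite -tensm_comp comp_id_r. Qed.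

Lemma shufN A B D E A' B' D' E' (f : hom A A') (g : hom B B') (h : hom D D') (l : hom E E') :
  shuf A' B' D' E' ∘ ((f ⊠ g) ⊠ (h ⊠ l)) = ((f ⊠ h) ⊠ (g ⊠ l)) ∘ shuf A B D E.
Proof.
  apply: tailid. rewrite !shufT. ra. rewrite ascK tcK comp_id_l Tnat tsplit. ra.
  by rewrite asciK.
Qed.

Lemma K1' A B : (lu A ⊠ idm B) ∘ asci munit A B = lu (A ⊗ B).
Proof. by rewrite -K1 -comp_assoc asc_iso2 comp_id_r. Qed.
Lemma K1'K A B E (k : hom E _) : (lu A ⊠ idm B) ∘ (asci munit A B ∘ k) = lu (A ⊗ B) ∘ k.
Proof. by rewrite comp_assoc K1'. Qed.
Lemma tri'K A B E (k : hom E _) : (ru A ⊠ idm B) ∘ (asci A munit B ∘ k) = (idm A ⊠ lu B) ∘ k.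
Proof. by rewrite comp_assoc tri'. Qed.

Lemma UT A B : (idm A ⊠ lu B) ∘ T munit A B = lu (A ⊗ B).
Proof.
  rewrite /T. apply: tailid. ra. rewrite triK tcK B1 comp_id_l K1'K. done.
Qed.
Lemma UT2 B : lu (B ⊗ munit) ∘ T B munit munit = idm B ⊠ lu munit.
Proof.
  rewrite /T. apply: tailid. ra. rewrite K1K tcK B2 comp_id_l tri'K. done.
Qed.

Lemma K2K A B E (k : hom E _) : (idm A ⊠ ru B) ∘ (asc A B munit ∘ k) = ru (A ⊗ B) ∘ k.
Proof. by rewrite comp_assoc K2. Qed.

Lemma UL A B :
  shuf munit munit A B ∘ (lui munit ⊠ idm (A ⊗ B)) ∘ lui (A ⊗ B) = lui A ⊠ lui B.
Proof.
  apply: (cancel_l (X:=lu A ⊠ lu B) (Y:=lui A ⊠ lui B)).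
  { by rewrite -tensm_comp !lu_iso1 tid. }
  rewrite -tensm_comp !lu_iso2 tid.
  apply: tailid. rewrite shufT. ra. rewrite (sepl (lu A)). ra.
  rewrite -(tid munit A) -asciK K1'K tcK comp_id_l UT triK.
  by rewrite tcK -K3 lu_iso2 !comp_id_l tid !comp_id_l luluiK.
Qed.

Lemma UR A B :
  shuf A B munit munit ∘ (idm (A ⊗ B) ⊠ lui munit) ∘ rui (A ⊗ B) = rui A ⊠ rui B.
Proof.
  apply: (cancel_l (X:=ru A ⊠ ru B) (Y:=rui A ⊠ rui B)).
  { by rewrite -tensm_comp !ru_iso1 tid. }
  rewrite -tensm_comp !ru_iso2 tid.
  apply: tailid. rewrite shufT. ra. rewrite (sepr (ru A)). ra.
  rewrite tri'K tcK tcK !comp_id_l.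
  rewrite -(comp_assoc (ru B)) UT2 tsr. ra.
  rewrite -ascK tid tcK comp_id_l lu_iso2 tid comp_id_l K2K.
  by rewrite ruruiK.
Qed.
End Unit.

Section Alg.
Context {Ob : Type} {C : Category Ob} {M : @Monoidal Ob C} {Br : @Braided Ob C M}.
Ltac ra := repeat rewrite <- comp_assoc.

Definition shufL := locked (@shuf Ob C M Br).
Lemma shufL_eq A B D E : shuf A B D E = shufL A B D E.
Proof. by rewrite /shufL -lock. Qed.
Lemma ra3 A B D E F (x : hom E F) (y : hom D E) (z : hom B D) (k : hom A B) :
  x ∘ (y ∘ (z ∘ k)) = x ∘ y ∘ z ∘ k.
Proof. by rewrite !comp_assoc. Qed.

Lemma shufNK A B D E A' B' D' E' F (f : hom A A') (g : hom B B') (h : hom D D') (l : hom E E') (k : hom F _) :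
  shufL A' B' D' E' ∘ (((f ⊠ g) ⊠ (h ⊠ l)) ∘ k) = ((f ⊠ h) ⊠ (g ⊠ l)) ∘ (shufL A B D E ∘ k).
Proof.
  rewrite /shufL -!lock.
  rewrite (comp_assoc (shuf A' B' D' E')) shufN. symmetry. apply: comp_assoc.
Qed.
Lemma shuf_assocK a b c d e f F (k : hom F _) :
  (asc a c e ⊠ asc b d f) ∘ (shufL (a ⊗ c) (b ⊗ d) e f ∘ ((shufL a b c d ⊠ (idm e ⊠ idm f)) ∘ k))
  = shufL a b (c ⊗ e) (d ⊗ f) ∘ (((idm a ⊠ idm b) ⊠ shufL c d e f) ∘ (asc (a ⊗ b) (c ⊗ d) (e ⊗ f) ∘ k)).
Proof. rewrite /shufL -!lock !tid ra3 ra3 shuf_assoc. reflexivity. Qed.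
Lemma ULK A B F (k : hom F _) :
  shufL munit munit A B ∘ ((lui munit ⊠ (idm A ⊠ idm B)) ∘ (lui (A ⊗ B) ∘ k)) = (lui A ⊠ lui B) ∘ k.
Proof. rewrite /shufL -!lock tid ra3 UL. reflexivity. Qed.
Lemma URK A B F (k : hom F _) :
  shufL A B munit munit ∘ (((idm A ⊠ idm B) ⊠ lui munit) ∘ (rui (A ⊗ B) ∘ k)) = (rui A ⊠ rui B) ∘ k.
Proof. rewrite /shufL -!lock tid ra3 UR. reflexivity. Qed.

Lemma tmul_assoc A B (mA : hom (A ⊗ A) A) (mB : hom (B ⊗ B) B)
  (hA : mA ∘ (mA ⊠ idm A) = mA ∘ (idm A ⊠ mA) ∘ asc A A A)
  (hB : mB ∘ (mB ⊠ idm B) = mB ∘ (idm B ⊠ mB) ∘ asc B B B) :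
  tmul mA mB ∘ (tmul mA mB ⊠ idm (A ⊗ B)) = tmul mA mB ∘ (idm (A ⊗ B) ⊠ tmul mA mB) ∘ asc (A ⊗ B) (A ⊗ B) (A ⊗ B).
Proof.
  rewrite /tmul !shufL_eq. apply: tailid. ra.
  rewrite (tsl _ _ (mA ⊠ mB)) (tsr _ _ (mA ⊠ mB)) -(tid A B). ra.
  rewrite !shufNK tcK hA hB !tensm_comp. ra.
  by rewrite shuf_assocK.
Qed.

Lemma tmul_unitl A B (mA : hom (A ⊗ A) A) (mB : hom (B ⊗ B) B) uA uB
  (hA : mA ∘ (uA ⊠ idm A) ∘ lui A = idm A) (hB : mB ∘ (uB ⊠ idm B) ∘ lui B = idm B) :
  tmul mA mB ∘ (tunit uA uB ⊠ idm (A ⊗ B)) ∘ lui (A ⊗ B) = idm (A ⊗ B).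
Proof.
  rewrite /tmul /tunit !shufL_eq. apply: tailid. ra.
  rewrite (tsl _ _ (uA ⊠ uB)) -(tid A B). ra.
  by rewrite shufNK ULK tcK tcK hA hB.
Qed.

Lemma tmul_unitr A B (mA : hom (A ⊗ A) A) (mB : hom (B ⊗ B) B) uA uB
  (hA : mA ∘ (idm A ⊠ uA) ∘ rui A = idm A) (hB : mB ∘ (idm B ⊠ uB) ∘ rui B = idm B) :
  tmul mA mB ∘ (idm (A ⊗ B) ⊠ tunit uA uB) ∘ rui (A ⊗ B) = idm (A ⊗ B).
Proof.
  rewrite /tmul /tunit !shufL_eq. apply: tailid. ra.
  rewrite (tsr _ _ (uA ⊠ uB)) -(tid A B). ra.
  by rewrite shufNK URK tcK tcK hA hB.
Qed.
End Alg.

Section Final.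
Context {Ob : Type} {C : Category Ob} {M : @Monoidal Ob C} {Br : @Braided Ob C M}.
Ltac ra := repeat rewrite <- comp_assoc.

Lemma tsplitL A B D D' E (f : hom A B) (g : hom D' E) (h : hom D D') :
  (g ∘ h) ⊠ f = (g ⊠ f) ∘ (h ⊠ idm A).
Proof. by rewrite -tensm_comp comp_id_r. Qed.

Lemma epi_comp A B D (f : hom B D) (g : hom A B) : epi f -> epi g -> epi (f ∘ g).
Proof. move=> ef eg E x y e. apply: ef. apply: eg. by rewrite -!comp_assoc. Qed.
Lemma epi_po A B (e : hom A B) : epi e -> is_pushout e e (idm B) (idm B).
Proof.
  move=> ee. split; first by [].
  move=> Q b d bd. exists b. split.
  - split; first exact: comp_id_r. by rewrite comp_id_r; apply: ee.
  - by move=> h' [h1 _]; rewrite comp_id_r in h1.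
Qed.
Lemma epi_tr (Hp : tensor_preserves_pushouts) Y A B (e : hom A B) : epi e -> epi (e ⊠ idm Y).
Proof.
  move=> ee. have [_ U] := proj1 (Hp Y _ _ _ _ _ _ _ _ (epi_po ee)).
  move=> D g h eq. have [k [[k1 k2] _]] := U D g h eq.
  rewrite tid comp_id_r in k1. rewrite tid comp_id_r in k2. by rewrite -k1 -k2.
Qed.
Lemma epi_tl (Hp : tensor_preserves_pushouts) Y A B (e : hom A B) : epi e -> epi (idm Y ⊠ e).
Proof.
  move=> ee. have [_ U] := proj2 (Hp Y _ _ _ _ _ _ _ _ (epi_po ee)).
  move=> D g h eq. have [k [[k1 k2] _]] := U D g h eq.
  rewrite tid comp_id_r in k1. rewrite tid comp_id_r in k2. by rewrite -k1 -k2.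
Qed.

Lemma alg_from_epi A P (p : hom A P) mA uA mP uP :
  epi p -> epi ((p ⊠ p) ⊠ p) -> mP ∘ (p ⊠ p) = p ∘ mA -> uP = p ∘ uA ->
  is_algebra mA uA -> is_algebra mP uP.
Proof.
  move=> ep ep3 key hu [ha [hl hr]].
  have keyK : forall E (k : hom E _), mP ∘ ((p ⊠ p) ∘ k) = p ∘ (mA ∘ k).
  { move=> E k. by rewrite !comp_assoc key. }
  split; [|split].
  - apply: ep3. apply: tailid. ra.
    rewrite tcK comp_id_l key tsplitL. ra. rewrite keyK.
    rewrite ascK tcK comp_id_l key tsplit. ra. rewrite keyK.
    by rewrite !comp_assoc -(comp_assoc p mA) ha !comp_assoc.
  - apply: ep. apply: tailid. ra.
    rewrite luiK tcK (comp_id_r uP) (comp_id_l p) hu tsplitL. ra. rewrite keyK.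
    rewrite !comp_assoc -(comp_assoc p mA) -(comp_assoc p) hl. by rewrite !comp_id_l !comp_id_r.
  - apply: ep. apply: tailid. ra.
    rewrite ruiK tcK (comp_id_r uP) (comp_id_l p) hu tsplit. ra. rewrite keyK.
    rewrite !comp_assoc -(comp_assoc p mA) -(comp_assoc p) hr. by rewrite !comp_id_l !comp_id_r.
Qed.
End Final.

Unset Implicit Arguments.

Theorem mainTheorem14 (Ob : Type) (C : Category Ob) (M : @Monoidal Ob C)
    (Br : @Braided Ob C M) (Cl : @Closed Ob C M) (PO : @HasPushouts Ob C)
    (Hpres : tensor_preserves_pushouts) (Hreg : all_epis_regular)
    (H : Ob) (HH : HopfAlg H)
    (A AH : Ob) (piA : hom (A ⊗ H) AH) (rhoA : hom A AH)
    (m : hom (A ⊗ A) A) (mH : hom (tens_bullet HH piA piA) AH)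
    (u : hom munit A) (uH : hom H AH)
    (Halg : qPMod_algebra HH piA rhoA m mH u uH) :
  is_algebra m u /\
  exists (mAH : hom (AH ⊗ AH) AH) (uAH : hom munit AH),
    is_algebra mAH uAH /\
    is_alg_morph (tmul m (hmul HH)) (tunit u (hunit HH)) mAH uAH piA /\
    is_alg_morph m u mAH uAH rhoA.
Proof.
  case: Halg => [Hq [HmH1 [HmH2 [Hu1 [Hu2 [Ha [Hr Hl]]]]]]].
  case: Hq => [Hepi _].
  split; first by split; [exact: Ha | split; [exact: Hl | exact: Hr]].
  exists (mH ∘ tens_mubar HH piA piA), (rhoA ∘ u).
  have sq : tens_mubar HH piA piA ∘ (piA ⊠ piA) = tens_pi HH piA piA ∘ mu_XY HH A A
    := proj1 (po_spec _ _).
  have key : (mH ∘ tens_mubar HH piA piA) ∘ (piA ⊠ piA) = piA ∘ tmul m (hmul HH).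
  { rewrite -comp_assoc sq comp_assoc HmH1 /mu_XY /tmul.
    rewrite -(comp_assoc piA) (comp_assoc (m ⊠ idm H)) -tensm_comp comp_id_l comp_id_r.
    reflexivity. }
  have Hu : rhoA ∘ u = piA ∘ tunit u (hunit HH).
  { rewrite /tunit (sepl u) -Hu2. apply: tailid.
    repeat rewrite <- comp_assoc.
    rewrite (comp_assoc piA) -Hu1.
    repeat rewrite <- comp_assoc.
    by rewrite luK luluiK. }
  have HunH : hmul HH ∘ (hunit HH ⊠ idm H) ∘ lui H = idm H by rewrite h_unitl lu_iso2.
  have HunH' : hmul HH ∘ (idm H ⊠ hunit HH) ∘ rui H = idm H by rewrite h_unitr ru_iso2.
  split; [|split].
  - apply: (alg_from_epi (p:=piA) (mA:=tmul m (hmul HH)) (uA:=tunit u (hunit HH))).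
    + exact: Hepi.
    + rewrite sepl (sepl piA piA).
      apply: epi_comp; last exact: epi_tl.
      apply: epi_tr => //. apply: epi_comp; [exact: epi_tr | exact: epi_tl].
    + exact: key.
    + exact: Hu.
    + split; [|split].
      * exact: tmul_assoc Ha (h_assoc HH).
      * exact: tmul_unitl Hl HunH.
      * exact: tmul_unitr Hr HunH'.
  - split; first by rewrite key.
    by rewrite Hu.
  - split; last by [].
    by rewrite -comp_assoc -HmH2.
Qed.
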